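(* Let $A\in\mathbb{R}^{p\times n}$ with $A\mathbf{1}=\mathbf{0}$, let $A=U\Sigma V$ be its compact SVD with singular values in descending order ($V$ with orthonormal rows), and let $K$ be an integer with $2\le K\le\operatorname{rank}(A)+1$; let $V_{1:K-1}$ be the first $K-1$ rows of $V$ (the solution of PCA $\min_{D,X}\|A-DX\|_F^2$ s.t. $XX^T=I$, $X\in\mathbb{R}^{(K-1)\times n}$). Put $\beta=-\min_{i,j}(A^TA)_{ij}$, $\tilde A=\begin{bmatrix}\sqrt\beta\,\mathbf{1}^T\\ A\end{bmatrix}$, $W=\tilde A^T\tilde A$, $L=\operatorname{diag}(W\mathbf{1})-W$. Let $H\in\mathbb{R}^{K\times n}$ be a normalized-indicator solution of K-means $\min_{D,X}\|A-DX\|_F^2$ s.t. $X\in\mathcal{H}$ (equivalently of ratio cut $\min_X\operatorname{tr}\{XLX^T\}$ s.t. $X\in\mathcal{H}$). If $W$ satisfies the ideal graph condition with respect to $K$ clusters, then there exists $R\in\mathbb{R}^{K\times K}$ with $R^TR=I$ such that $$\begin{bmatrix}\tfrac1{\sqrt n}\mathbf{1}^T\\ V_{1:K-1}\end{bmatrix}=RH.$$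
   Context: $\mathbf{1}$ is the all-ones vector, $\operatorname{diag}(v)$ the diagonal matrix with diagonal $v$. $\mathcal{F}$ is the set of matrices $F\in\{0,1\}^{K\times n}$ each of whose columns has exactly one entry $1$ (clusters nonempty), and $\mathcal{H}=\{(FF^T)^{-1/2}F:F\in\mathcal{F}\}$. Ideal graph condition for $W$ with respect to $K$: the graph on $\{1,\dots,n\}$ with an edge between $i,j$ whenever $W_{ij}>0$ has exactly $K$ connected components. *)

(* Defs.v *)
From HB Require Import structures.
From mathcomp Require Import all_boot all_order all_algebra.
From mathcomp Require Import reals.
Set Implicit Arguments. Unset Strict Implicit. Unset Printing Implicit Defensive.
Import Order.TTheory GRing.Theory Num.Theory.
Local Open Scope ring_scope.

Definition ones {R : realType} (n : nat) : 'cV[R]_n := const_mx 1.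

Definition frob2 {R : realType} {m n : nat} (M : 'M[R]_(m, n)) : R :=
  \sum_(i < m) \sum_(j < n) M i j ^+ 2.

Definition is_min_entry {R : realType} {m n : nat} (M : 'M[R]_(m, n)) (mu : R) :=
  (exists i j, M i j = mu) /\ (forall i j, mu <= M i j).

Definition in_F {R : realType} {K n : nat} (F : 'M[R]_(K, n)) : Prop :=
  [/\ forall k j, F k j = 0 \/ F k j = 1,
      forall j, exists! k, F k j = 1
    & forall k, exists j, F k j = 1].

(* For F in \mathcal{F}, F F^T is diagonal with positive diagonal entries
   (the cluster sizes), so (F F^T)^{-1/2} is the diagonal matrix with entries
   1/sqrt((F F^T)_kk). *)
Definition inv_sqrt_diag {R : realType} {K : nat} (D : 'M[R]_K) : 'M[R]_K :=
  diag_mx (\row_k (Num.sqrt (D k k))^-1).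

Definition in_H {R : realType} {K n : nat} (X : 'M[R]_(K, n)) : Prop :=
  exists F : 'M[R]_(K, n), in_F F /\ X = inv_sqrt_diag (F *m F^T) *m F.

Definition n_components {R : realType} {n : nat} (W : 'M[R]_n) : nat :=
  let e := [rel i j : 'I_n | 0 < W i j] in
  #|[set [set j | connect e i j] | i : 'I_n]|.

Definition ideal_graph {R : realType} {n : nat} (W : 'M[R]_n) (K : nat) : Prop :=
  n_components W = K.

(* Entry (k, j) of row k of V (0 if k is out of range). *)
Definition row_at {R : realType} {r n : nat} (V : 'M[R]_(r, n)) (k : nat) (j : 'I_n) : R :=
  match @insub _ (fun i => i < r)%N 'I_r k with Some i => V i j | None => 0 end.

Definition pca_stack {R : realType} {r n : nat} (K : nat) (V : 'M[R]_(r, n)) : 'M[R]_(K, n) :=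
  \matrix_(k < K, j < n)
     if (k == 0 :> nat) then (Num.sqrt (n%:R))^-1 else row_at V (k.-1) j.

(* Main.v *)
Require Import Defs.
From HB Require Import structures.
From mathcomp Require Import all_boot all_order all_algebra.
From mathcomp Require Import reals.
From mathcomp Require Import ring lra zify.
Import Order.TTheory GRing.Theory Num.Theory.
Local Open Scope ring_scope.

Section Gen.
Context {R : realType}.

Definition qf {n} (M : 'M[R]_n) (x : 'I_n -> R) : R :=
  \sum_j (\sum_i x i * M i j) * x j.

Lemma qf_entry {K n} (X : 'M[R]_(K, n)) (M : 'M[R]_n) k :
  (X *m M *m X^T) k k = qf M (X k).
Proof.
rewrite /qf !mxE; apply: eq_bigr => j _; rewrite !mxE; congr (_ * _).
Qed.

Lemma trace_qf {K n} (X : 'M[R]_(K, n)) (M : 'M[R]_n) :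
  \tr (X *m M *m X^T) = \sum_k qf M (X k).
Proof. by apply: eq_bigr => k _; rewrite qf_entry. Qed.

Lemma lap_id {n} (W : 'M[R]_n) (d : R) (x : 'I_n -> R) :
  (forall i j, W i j = W j i) -> (forall i, \sum_j W i j = d) ->
  (d * \sum_i x i ^+ 2 - qf W x) * 2 =
  \sum_i \sum_j W i j * (x i - x j) ^+ 2.
Proof.
move=> Hs Hr.
have E : forall i j, W i j * (x i - x j) ^+ 2 =
   W i j * x i ^+ 2 + W j i * x j ^+ 2 - 2 * (x i * W i j * x j).
  by move=> i j; rewrite (Hs j i); ring.
have -> : \sum_i \sum_j W i j * (x i - x j) ^+ 2 =
  \sum_i \sum_j W i j * x i ^+ 2 + \sum_i \sum_j W j i * x j ^+ 2
  - \sum_i \sum_j 2 * (x i * W i j * x j).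
  rewrite -big_split -sumrB; apply: eq_bigr => i _.
  by rewrite -big_split -sumrB; apply: eq_bigr => j _; rewrite E.
have E1 : \sum_i \sum_j W i j * x i ^+ 2 = d * \sum_i x i ^+ 2.
  rewrite mulr_sumr; apply: eq_bigr => i _; rewrite -mulr_suml Hr; ring.
have E2 : \sum_i \sum_j W j i * x j ^+ 2 = d * \sum_i x i ^+ 2.
  by rewrite exchange_big /= E1.
have E3 : \sum_i \sum_j 2 * (x i * W i j * x j) = 2 * qf W x.
  rewrite /qf exchange_big mulr_sumr; apply: eq_bigr => j _.
  rewrite mulr_suml mulr_sumr; apply: eq_bigr => i _; ring.
rewrite E1 E2.
rewrite E3; ring.
Qed.

Lemma lap_le {n} (W : 'M[R]_n) (d : R) (x : 'I_n -> R) :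
  (forall i j, W i j = W j i) -> (forall i, \sum_j W i j = d) ->
  (forall i j, 0 <= W i j) -> qf W x <= d * \sum_i x i ^+ 2.
Proof.
move=> Hs Hr Hp; rewrite -subr_ge0.
have := lap_id W d x Hs Hr => E.
have : 0 <= (d * \sum_i x i ^+ 2 - qf W x) * 2.
  rewrite E; apply: sumr_ge0 => i _; apply: sumr_ge0 => j _.
  by apply: mulr_ge0 => //; apply: sqr_ge0.
by rewrite pmulr_lge0.
Qed.

Lemma lap_eq {n} (W : 'M[R]_n) (d : R) (x : 'I_n -> R) :
  (forall i j, W i j = W j i) -> (forall i, \sum_j W i j = d) ->
  (forall i j, 0 <= W i j) -> qf W x = d * \sum_i x i ^+ 2 ->
  forall i j, 0 < W i j -> x i = x j.
Proof.
move=> Hs Hr Hp Hq i j Wij.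
have := lap_id W d x Hs Hr; rewrite Hq subrr mul0r => /esym E.
have H0 : forall i, 0 <= \sum_j W i j * (x i - x j) ^+ 2.
  by move=> i'; apply: sumr_ge0 => j' _; apply: mulr_ge0 => //; apply: sqr_ge0.
have := psumr_eq0P (fun i _ => H0 i) E (i:=i) isT => E2.
have H1 : forall j, true -> 0 <= W i j * (x i - x j) ^+ 2.
  by move=> j' _; apply: mulr_ge0 => //; apply: sqr_ge0.
have /eqP := psumr_eq0P H1 E2 (i:=j) isT.
rewrite mulf_eq0 (gt_eqF Wij) /= sqrf_eq0 subr_eq0 => /eqP //.
Qed.

Lemma lap_eq_conv {n} (W : 'M[R]_n) (d : R) (x : 'I_n -> R) :
  (forall i j, W i j = W j i) -> (forall i, \sum_j W i j = d) ->
  (forall i j, 0 <= W i j) -> (forall i j, 0 < W i j -> x i = x j) ->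
  qf W x = d * \sum_i x i ^+ 2.
Proof.
move=> Hs Hr Hp Hc.
have := lap_id W d x Hs Hr.
have -> : \sum_i \sum_j W i j * (x i - x j) ^+ 2 = 0.
  apply: big1 => i _; apply: big1 => j _.
  have [/Hc ->|] := ltP 0 (W i j); first by rewrite subrr expr0n mulr0.
  move=> Wle; have -> : W i j = 0 by apply/le_anti; rewrite Wle Hp.
  by rewrite mul0r.
move/eqP; rewrite mulf_eq0 pnatr_eq0 orbF subr_eq0 => /eqP ->//.
Qed.

Lemma path_const {T : finType} (e : rel T) (f : T -> R) :
  (forall i j, e i j -> f i = f j) -> forall i j, connect e i j -> f i = f j.
Proof.
move=> He i j /connectP [p pth ->]; elim: p i pth => //= k p IH i /andP [eik pk].
by rewrite (He _ _ eik); apply: IH.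
Qed.

Lemma sum_le_eq {I : finType} (P : pred I) (a : I -> R) (b : R) :
  (forall i, P i -> a i <= b) -> \sum_(i | P i) b <= \sum_(i | P i) a i ->
  forall i, P i -> a i = b.
Proof.
move=> Ha Hs i Pi.
have H0 : forall i, P i -> 0 <= b - a i by move=> i' /Ha; rewrite subr_ge0.
have E : \sum_(i | P i) (b - a i) = 0.
  apply/le_anti; rewrite sumr_ge0 // andbT sumrB subr_le0 //.
have /eqP := psumr_eq0P H0 E Pi; rewrite subr_eq0 => /eqP //.
Qed.

Lemma count_ord (m k : nat) : (k <= m)%N ->
  \sum_(j < m | (j < k)%N) (1 : R) = k%:R.
Proof.
move=> km; rewrite -(big_ord_widen m (fun _ => (1:R)) km) /=.
by rewrite sumr_const card_ord.
Qed.

Lemma threshold (m k : nat) (lam w : 'I_m -> R) (c : R) :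
  (k <= m)%N -> 0 <= c ->
  (forall j : 'I_m, (j < k)%N -> c <= lam j) ->
  (forall j : 'I_m, (k <= j)%N -> lam j <= c) ->
  (forall j, 0 <= w j) -> (forall j, w j <= 1) ->
  \sum_j w j <= k%:R ->
  \sum_j lam j * w j <= \sum_(j : 'I_m | (j < k)%N) lam j.
Proof.
move=> km c0 Hl Hg w0 w1 Hw.
pose P := (fun j : 'I_m => (j < k)%N).
rewrite (bigID P) /=.
set A1 := \sum_(j | P j) lam j * w j.
set A2 := \sum_(j | ~~ P j) lam j * w j.
set L := \sum_(j | P j) lam j.
have E1 : \sum_(j | P j) c * (1 - w j) <= L - A1.
  rewrite /L /A1 -sumrB; apply: ler_sum => j jk.
  rewrite -[X in _ <= X - _]mulr1 -mulrBr.
  by apply: ler_wpM2r; [rewrite subr_ge0| apply: Hl].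
have E2 : A2 <= \sum_(j | ~~ P j) c * w j.
  apply: ler_sum => j; rewrite /P -leqNgt => jk.
  by apply: ler_wpM2r => //; apply: Hg.
have E3 : \sum_(j | P j) c * (1 - w j) - \sum_(j | ~~ P j) c * w j
    = c * (k%:R - \sum_j w j).
  rewrite -!mulr_sumr -mulrBr; congr (_ * _).
  rewrite sumrB {1}/P count_ord // [in RHS](bigID P) /=.
  by rewrite opprD addrA.
have : 0 <= c * (k%:R - \sum_j w j) by apply: mulr_ge0; rewrite ?subr_ge0.
rewrite -E3 => H3.
lra.
Qed.

End Gen.


Section Gen2.
Context {R : realType}.

Lemma sqsum_ge0 {m n} (N : 'M[R]_(m, n)) i : 0 <= (N *m N^T) i i.
Proof. rewrite mxE; apply: sumr_ge0 => j _; rewrite mxE; by rewrite -expr2 sqr_ge0. Qed.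

Lemma tr_sq_ge0 {m n} (N : 'M[R]_(m, n)) : 0 <= \tr (N *m N^T).
Proof. by apply: sumr_ge0 => i _; apply: sqsum_ge0. Qed.

Lemma proj_sq {m n p} (Y : 'M[R]_(m, n)) (Z : 'M[R]_(p, n)) :
  Y *m Y^T = 1%:M ->
  (Z - Z *m Y^T *m Y) *m (Z - Z *m Y^T *m Y)^T = Z *m Z^T - Z *m Y^T *m Y *m Z^T.
Proof.
move=> HY.
rewrite linearB /= !trmx_mul trmxK mulmxBl !mulmxBr.
have E : Z *m Y^T *m Y *m (Y^T *m (Y *m Z^T)) = Z *m Y^T *m Y *m Z^T.
  by rewrite -!mulmxA (mulmxA Y Y^T) HY mul1mx.
rewrite E !mulmxA.
by rewrite subrr subr0.
Qed.

Lemma subE {m n} (A B : 'M[R]_(m, n)) i j : (A - B) i j = A i j - B i j.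
Proof. by rewrite !mxE. Qed.

Lemma proj_diag {m n p} (Y : 'M[R]_(m, n)) (Z : 'M[R]_(p, n)) i :
  Y *m Y^T = 1%:M -> (Z *m Y^T *m Y *m Z^T) i i <= (Z *m Z^T) i i.
Proof.
move=> HY; rewrite -subr_ge0.
have := sqsum_ge0 (Z - Z *m Y^T *m Y) i.
by rewrite proj_sq // subE.
Qed.

Lemma proj_tr {m n p} (Y : 'M[R]_(m, n)) (Z : 'M[R]_(p, n)) :
  Y *m Y^T = 1%:M -> \tr (Z *m Y^T *m Y *m Z^T) <= \tr (Z *m Z^T).
Proof. by move=> HY; apply: ler_sum => i _; apply: proj_diag. Qed.

Lemma inH_struct {K n} (X : 'M[R]_(K, n)) : in_H X ->
  exists F : 'M[R]_(K, n), in_F F /\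
    forall k j, X k j = (Num.sqrt (\sum_j' F k j' * F k j'))^-1 * F k j.
Proof.
move=> [F [HF ->]]; exists F; split => // k j.
rewrite /inv_sqrt_diag mul_diag_mx !mxE; congr (_^-1 * _); congr Num.sqrt.
by apply: eq_bigr => j' _; rewrite mxE.
Qed.

Lemma inF_facts {K n} (F : 'M[R]_(K, n)) : in_F F ->
  [/\ forall k j, F k j * F k j = F k j,
      forall k l j, k != l -> F k j * F l j = 0,
      forall k, 0 < \sum_j F k j * F k j
    & forall j, \sum_k F k j = 1].
Proof.
move=> [H01 Hu Hne]; split.
- by move=> k j; case: (H01 k j) => ->; rewrite ?mul0r ?mul1r.
- move=> k l j kl; case: (H01 k j) => Hk; first by rewrite Hk mul0r.
  case: (H01 l j) => Hl; first by rewrite Hl mulr0.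
  have [k0 [_ Hk0]] := Hu j.
  by move: kl; rewrite -(Hk0 _ Hk) -(Hk0 _ Hl) eqxx.
- move=> k; have [j Hj] := Hne k.
  rewrite (bigD1 j) //= Hj mul1r; apply: (lt_le_trans ltr01).
  rewrite lerDl; apply: sumr_ge0 => i _; by rewrite -expr2 sqr_ge0.
- move=> j; have [k0 [Hk0 Huniq]] := Hu j.
  rewrite (bigD1 k0) //= Hk0 big1 ?addr0 // => k kk0.
  case: (H01 k j) => // Hk; by move: kk0; rewrite -(Huniq _ Hk) eqxx.
Qed.

Lemma inH_orth {K n} (X : 'M[R]_(K, n)) : in_H X -> X *m X^T = 1%:M.
Proof.
move=> /inH_struct [F [HF HX]].
have [Fsq Fort Fpos Fcol] := inF_facts F HF.
apply/matrixP => k l; rewrite !mxE.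
under eq_bigr do rewrite mxE !HX.
case: eqVneq => [<-|kl] /=.
- set c := \sum_j' F k j' * F k j'.
  have c0 : 0 < c by apply: Fpos.
  have -> : \sum_j (Num.sqrt c)^-1 * F k j * ((Num.sqrt c)^-1 * F k j)
     = (Num.sqrt c)^-1 ^+ 2 * c.
    rewrite /c mulr_sumr; apply: eq_bigr => j _; ring.
  rewrite exprVn sqr_sqrtr ?mulVf //; first by rewrite gt_eqF.
  exact: ltW.
- apply: big1 => j _.
  have : F k j * F l j = 0 by apply: Fort.
  move=> E; rewrite mulrACA E mulr0 //.
Qed.

Lemma inH_J {K n} (X : 'M[R]_(K, n)) : in_H X ->
  \tr (X *m const_mx 1 *m X^T) = n%:R.
Proof.
move=> /inH_struct [F [HF HX]].
have [Fsq Fort Fpos Fcol] := inF_facts F HF.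
have E : forall k, (X *m const_mx 1 *m X^T) k k = \sum_j F k j * F k j.
  move=> k; rewrite !mxE.
  have -> : \sum_j (X *m const_mx 1) k j * X^T j k =
     (\sum_j X k j) * (\sum_j X k j).
    rewrite mulr_suml; apply: eq_bigr => j _; rewrite !mxE.
    rewrite mulrC; congr (_ * _); apply: eq_bigr => i _; rewrite mxE mulr1 //.
  under eq_bigr do rewrite HX.
  rewrite -mulr_sumr.
  set c := \sum_j' F k j' * F k j'.
  have Fs : \sum_j F k j = c by apply: eq_bigr => j _; rewrite Fsq.
  have c0 : 0 < c by apply: Fpos.
  rewrite Fs.
  have -> : (Num.sqrt c)^-1 * c * ((Num.sqrt c)^-1 * c)
     = (Num.sqrt c)^-1 ^+ 2 * c * c by ring.
  rewrite exprVn sqr_sqrtr ?mulVf ?mul1r //; [by rewrite gt_eqF | exact: ltW].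
rewrite /mxtrace; under eq_bigr do rewrite E.
rewrite exchange_big /=.
under eq_bigr do (under eq_bigr do rewrite Fsq; rewrite Fcol).
by rewrite sumr_const card_ord.
Qed.

End Gen2.


Section Gen3.
Context {R : realType}.

Lemma frob2_tr {m n} (M : 'M[R]_(m, n)) : frob2 M = \tr (M *m M^T).
Proof.
apply: eq_bigr => i _; rewrite !mxE; apply: eq_bigr => j _; by rewrite mxE expr2.
Qed.

Lemma tr_AXXA {p n K} (A : 'M[R]_(p, n)) (X : 'M[R]_(K, n)) :
  \tr (A *m X^T *m X *m A^T) = \tr (X *m (A^T *m A) *m X^T).
Proof.
rewrite -!mulmxA mxtrace_mulC -!mulmxA mxtrace_mulC -!mulmxA.
by rewrite mxtrace_mulC -!mulmxA.
Qed.

Lemma kmeans_eq {p n K} (A : 'M[R]_(p, n)) (X : 'M[R]_(K, n)) :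
  X *m X^T = 1%:M ->
  frob2 (A - A *m X^T *m X) = frob2 A - \tr (X *m (A^T *m A) *m X^T).
Proof.
move=> HX; rewrite !frob2_tr proj_sq // linearB /=.
by rewrite tr_AXXA.
Qed.

Lemma kmeans_bound {p n K} (A : 'M[R]_(p, n)) (H : 'M[R]_(K, n)) (D : 'M[R]_(p, K)) :
  H *m H^T = 1%:M ->
  frob2 A - \tr (H *m (A^T *m A) *m H^T) <= frob2 (A - D *m H).
Proof.
move=> HH.
rewrite -kmeans_eq // !frob2_tr.
set P := A - A *m H^T *m H.
set Q := A *m H^T - D.
have E : A - D *m H = P + Q *m H.
  by rewrite /P /Q mulmxBl -mulmxA addrA subrK.
have PH : P *m H^T = 0.
  by rewrite /P mulmxBl -!mulmxA HH mulmx1 subrr.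
clearbody P Q.
suff : \tr (P *m P^T) <= \tr ((P + Q *m H) *m (P + Q *m H)^T) by rewrite -E.
rewrite [(P + _)^T]linearD /= trmx_mul mulmxDl !mulmxDr.
have -> : P *m (H^T *m Q^T) = 0 by rewrite mulmxA PH mul0mx.
have -> : Q *m H *m (H^T *m Q^T) = Q *m Q^T.
  by rewrite -!mulmxA (mulmxA H) HH mul1mx.
have -> : Q *m H *m P^T = 0.
  by rewrite -mulmxA -(trmxK H) -trmx_mul PH trmx0 mulmx0.
rewrite addr0 add0r linearD /= lerDl.
exact: tr_sq_ge0.
Qed.

End Gen3.


Lemma rownorm (R : realType) {K n} (X : 'M[R]_(K, n)) k :
  X *m X^T = 1%:M -> \sum_j X k j ^+ 2 = 1.
Proof.
move=> /matrixP /(_ k k); rewrite !mxE eqxx /= => E; rewrite -[RHS]E.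
by apply: eq_bigr => j _; rewrite mxE expr2.
Qed.

Theorem theorem3 (R : realType) (p n K r : nat)
  (A : 'M[R]_(p, n)) (U : 'M[R]_(p, r)) (s : 'rV[R]_r) (V : 'M[R]_(r, n))
  (beta : R) (H : 'M[R]_(K, n)) :
  A *m ones n = 0 ->
  \rank A = r ->
  U^T *m U = 1%:M ->
  V *m V^T = 1%:M ->
  (forall i, 0 < s 0 i) ->
  (forall i j : 'I_r, (i <= j)%N -> s 0 j <= s 0 i) ->
  A = U *m diag_mx s *m V ->
  (2 <= K <= r.+1)%N ->
  is_min_entry (A^T *m A) (- beta) ->
  in_H H ->
  (exists D : 'M[R]_(p, K), forall (D' : 'M[R]_(p, K)) (X : 'M[R]_(K, n)),
      in_H X -> frob2 (A - D *m H) <= frob2 (A - D' *m X)) ->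
  (let At : 'M[R]_(1 + p, n) := col_mx (const_mx (Num.sqrt beta)) A in
   ideal_graph (At^T *m At) K) ->
  exists Rm : 'M[R]_K, Rm^T *m Rm = 1%:M /\ pca_stack K V = Rm *m H.
Proof.
move=> hA1 _ hUU hVV hs hsd hAsvd hK [[i0 [j0 hmin]] hminle] hH [D hD] hIG.
pose G := A^T *m A.
pose At : 'M[R]_(1 + p, n) := col_mx (const_mx (Num.sqrt beta)) A.
pose W := At^T *m At.
pose e := [rel i j : 'I_n | 0 < W i j].
pose comp i := [set j | connect e i j].
pose S := [set comp i | i : 'I_n].
have hS : #|S| = K := hIG.
have hG1 : forall i, \sum_j G i j = 0.
  move=> i; have E : G *m ones n = 0 by rewrite /G -mulmxA hA1 mulmx0.
  have : (G *m ones n) i 0 = 0 by rewrite E mxE.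
  rewrite mxE => E2; rewrite -[RHS]E2.
  by apply: eq_bigr => j _; rewrite [ones n j 0]mxE mulr1.
have hn : (0 < n)%N by apply: leq_ltn_trans (ltn_ord j0).
have hb : 0 <= beta.
  have : \sum_(j < n) (- beta) <= \sum_j G i0 j by apply: ler_sum => j _; apply: hminle.
  rewrite hG1 sumr_const card_ord -mulr_natr mulNr oppr_le0.
  by rewrite pmulr_lge0 // ltr0n.
have hWe : forall i j, W i j = beta + G i j.
  move=> i j; rewrite /W /At tr_col_mx mul_row_col mxE; congr (_ + _).
  by rewrite mxE big_ord1 !mxE -expr2 sqr_sqrtr.
have hGs : forall i j, G i j = G j i.
  by move=> i j; rewrite !mxE; apply: eq_bigr => k _; rewrite !mxE mulrC.
have hWs : forall i j, W i j = W j i by move=> i j; rewrite !hWe hGs.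
have hWp : forall i j, 0 <= W i j.
  by move=> i j; rewrite hWe; have := hminle i j; rewrite -/G; lra.
pose d := beta * n%:R.
have hWr : forall i, \sum_j W i j = d.
  move=> i; under eq_bigr do rewrite hWe.
  by rewrite big_split /= hG1 addr0 sumr_const card_ord /d mulr_natr.
pose cc (x : 'I_n -> R) := forall i j, connect e i j -> x i = x j.
have hle : forall x, qf W x <= d * \sum_i x i ^+ 2.
  by move=> x; apply: lap_le.
have hcc : forall x, qf W x = d * \sum_i x i ^+ 2 -> cc x.
  move=> x hx; apply: path_const => i j eij.
  exact: (lap_eq _ _ _ hWs hWr hWp hx).
have hccq : forall x, cc x -> qf W x = d * \sum_i x i ^+ 2.
  move=> x hx; apply: lap_eq_conv => // i j Wij; apply: hx; exact: connect1.
have hsym : connect_sym e.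
  by apply: sym_connect_sym => i j; rewrite /= hWs.
have hx0 : comp i0 \in S by apply/imsetP; exists i0.
pose idx j : 'I_K := cast_ord hS (enum_rank_in hx0 (comp j)).
have hcompS : forall j, comp j \in S by move=> j; apply/imsetP; exists j.
have hidx1 : forall i j, idx i = idx j -> connect e i j.
  move=> i j /cast_ord_inj /(enum_rank_in_inj (hcompS i) (hcompS j)) Ec.
  have : j \in comp j by rewrite inE connect0.
  by rewrite -Ec inE.
have hidx2 : forall i j, connect e i j -> idx i = idx j.
  move=> i j cij; rewrite /idx; congr (cast_ord _ (enum_rank_in _ _)).
  apply/setP => k; rewrite !inE; apply/idP/idP => H1.
  - by apply: connect_trans H1; rewrite hsym.
  - exact: connect_trans H1.
have hidx3 : forall k, exists j, idx j = k.
  move=> k; pose k' := cast_ord (esym hS) k.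
  have /imsetP [j _ Ej] := enum_valP k'.
  exists j; rewrite /idx -Ej enum_valK_in /k' cast_ordKV //.
pose F0 : 'M[R]_(K, n) := \matrix_(k, j) ((idx j == k)%:R).
have hF0 : in_F F0.
  split.
  - by move=> k j; rewrite mxE; case: (idx j == k); [right|left].
  - move=> j; exists (idx j); split; first by rewrite mxE eqxx.
    move=> k; rewrite mxE; case: eqVneq => // _ /esym /eqP; by rewrite oner_eq0.
  - move=> k; have [j Hj] := hidx3 k; exists j; by rewrite mxE Hj eqxx.
pose X0 := inv_sqrt_diag (F0 *m F0^T) *m F0.
have hX0H : in_H X0 by exists F0.
have hX0o : X0 *m X0^T = 1%:M := inH_orth _ hX0H.
have hX0e : forall k j, X0 k j = (Num.sqrt ((F0 *m F0^T) k k))^-1 * (idx j == k)%:R.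
  move=> k j; rewrite /X0 /inv_sqrt_diag mul_diag_mx mxE; congr (_ * _).
    by rewrite mxE.
  by rewrite mxE.
have hX0cc : forall k, cc (X0 k).
  by move=> k i j cij; rewrite !hX0e (hidx2 _ _ cij).
have hWmat : W = G + beta *: const_mx 1.
  apply/matrixP => i j; rewrite hWe !mxE mulr1 addrC; congr (_ + _).
have hGW : forall X : 'M[R]_(K, n), in_H X ->
    \tr (X *m G *m X^T) = \tr (X *m W *m X^T) - beta * n%:R.
  move=> X hX; rewrite hWmat mulmxDr mulmxDl linearD /= -scalemxAr -scalemxAl.
  by rewrite linearZ /= inH_J // addrK.
have hkm : \tr (X0 *m G *m X0^T) <= \tr (H *m G *m H^T).
  have h1 := hD (A *m X0^T) X0 hX0H.
  rewrite kmeans_eq // in h1.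
  have h2 := kmeans_bound A H D (inH_orth _ hH).
  rewrite -/G in h1 h2; lra.
have htrX0 : \tr (X0 *m W *m X0^T) = K%:R * d.
  rewrite trace_qf; under eq_bigr do rewrite hccq // rownorm // mulr1.
  by rewrite sumr_const card_ord mulr_natl.
have hHW : K%:R * d <= \tr (H *m W *m H^T).
  have := hGW _ hH; have := hGW _ hX0H; lra.
have hHo : H *m H^T = 1%:M := inH_orth _ hH.
have hHcc : forall k, cc (H k).
  move=> k; apply: hcc; rewrite rownorm // mulr1.
  apply: (sum_le_eq xpredT (fun k => qf W (H k)) d) => //.
    by move=> k' _; have := hle (H k'); rewrite rownorm // mulr1.
  by rewrite -trace_qf sumr_const card_ord -mulr_natl.
have sq_mono : forall a b : R, 0 <= a -> a <= b -> a ^+ 2 <= b ^+ 2.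
  by move=> a b a0 ab; rewrite !expr2; apply: ler_pM.
have hV1 : V *m ones n = 0.
  have E : diag_mx s *m (V *m ones n) = 0.
    have hUA : U^T *m A = diag_mx s *m V by rewrite hAsvd !mulmxA hUU mul1mx.
    by rewrite mulmxA -hUA -mulmxA hA1 mulmx0.
  apply/matrixP => i j; move/matrixP: E => /(_ i j); rewrite mul_diag_mx !mxE.
  by move/eqP; rewrite mulf_eq0 (gt_eqF (hs i)) /= => /eqP.
pose s2 : 'rV[R]_r := \row_k s 0 k ^+ 2.
have hdiag : diag_mx s *m diag_mx s = diag_mx s2.
  apply/matrixP => i j; rewrite mul_diag_mx !mxE.
  by case: eqVneq => [->|_]; rewrite ?mulr1n ?mulr0n ?mulr0 // expr2.
have hGV : G = V^T *m diag_mx s2 *m V.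
  rewrite /G hAsvd !trmx_mul tr_diag_mx -hdiag.
  rewrite -!mulmxA; congr (_ *m _); rewrite !mulmxA; congr (_ *m _).
  by rewrite -(mulmxA _ U^T) hUU mulmx1.
have hJ : (const_mx 1 : 'M[R]_n) = ones n *m (ones n)^T.
  by apply/matrixP => i j; rewrite !mxE big_ord1 !mxE mulr1.
have hVWV : V *m W *m V^T = diag_mx s2.
  rewrite hWmat hGV hJ mulmxDr mulmxDl -scalemxAr -scalemxAl.
  rewrite !mulmxA hVV mul1mx -(mulmxA _ V) hVV mulmx1.
  by rewrite hV1 !mul0mx scaler0 addr0.
have hqV : forall k, qf W (V k) = s 0 k ^+ 2.
  by move=> k; rewrite -qf_entry hVWV !mxE eqxx mulr1n.
have hsd2 : forall k, s 0 k ^+ 2 <= d.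
  by move=> k; have := hle (V k); rewrite hqV rownorm // mulr1.
pose t := Num.sqrt (n%:R : R).
have ht : t ^+ 2 = n%:R by rewrite sqr_sqrtr // ler0n.
have ht0 : t != 0 by rewrite sqrtr_eq0 -ltNge ltr0n.
pose u : 'rV[R]_n := const_mx t^-1.
have hun : u *m u^T = 1%:M.
  apply/matrixP => i j; rewrite !ord1 !mxE /=.
  under eq_bigr do rewrite !mxE.
  rewrite sumr_const card_ord -mulr_natl -ht; field.
  by rewrite ht0.
have huV : V *m u^T = 0.
  apply/matrixP => i j; move/matrixP: hV1 => /(_ i ord0).
  rewrite !mxE => E.
  transitivity ((\sum_k V i k * ones n k ord0) * t^-1); last by rewrite E mul0r.
  by rewrite mulr_suml; apply: eq_bigr => k _; rewrite !mxE mulr1.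
pose Vt : 'M[R]_(1 + r, n) := col_mx u V.
have hVt : Vt *m Vt^T = 1%:M.
  rewrite /Vt tr_col_mx mul_col_row hun huV hVV -(trmxK (u *m V^T)) trmx_mul trmxK huV.
  by rewrite trmx0 -scalar_mx_block.
pose lam : 'rV[R]_(1 + r) := row_mx (const_mx d : 'rV_1) s2.
have hWdec : W = Vt^T *m diag_mx lam *m Vt.
  rewrite /Vt /lam tr_col_mx diag_mx_row mul_row_block !mulmx0 addr0 add0r.
  rewrite mul_row_col -hGV hWmat addrC; congr (_ + _).
  apply/matrixP => i j; rewrite !mxE big_ord1 !mxE /d -ht. rewrite big_ord1 !mxE eqxx mulr1n mulr1. field.
  by rewrite ht0.
pose M := H *m Vt^T.
pose w (j : 'I_(1 + r)) := \sum_k M k j ^+ 2.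
have hMT : M^T = Vt *m H^T by rewrite /M trmx_mul trmxK.
have htrHW : \tr (H *m W *m H^T) = \sum_j lam 0 j * w j.
  have -> : H *m W *m H^T = M *m diag_mx lam *m M^T.
    by rewrite hMT hWdec /M !mulmxA.
  transitivity (\sum_k \sum_j M k j * lam 0 j * M k j).
    apply: eq_bigr => k _; rewrite mul_mx_diag mxE; apply: eq_bigr => j _.
    by rewrite mxE [M^T j k]mxE.
  rewrite exchange_big /=; apply: eq_bigr => j _; rewrite /w mulr_sumr.
  by apply: eq_bigr => k _; rewrite expr2; ring.
have hwM : forall j, w j = (M^T *m M) j j.
  by move=> j; rewrite mxE /w; apply: eq_bigr => k _; rewrite [M^T j k]mxE expr2.
have hw0 : forall j, 0 <= w j.
  by move=> j; apply: sumr_ge0 => k _; apply: sqr_ge0.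
have hw1 : forall j, w j <= 1.
  move=> j; rewrite hwM hMT /M -!mulmxA (mulmxA H^T) !mulmxA.
  have := proj_diag H Vt j hHo; move/le_trans; apply.
  by rewrite hVt mxE eqxx.
have hwK : \sum_j w j <= K%:R.
  have -> : \sum_j w j = \tr (M *m M^T).
    rewrite /w exchange_big /=; apply: eq_bigr => k _; rewrite mxE.
    by apply: eq_bigr => j _; rewrite [M^T j k]mxE expr2.
  rewrite hMT /M !mulmxA -[X in _ <= X](mxtrace1 R K) -hHo.
  exact: proj_tr.
have hK2 : (K.-2 < r)%N by move: hK => /andP [? ?]; lia.
pose kK : 'I_r := Ordinal hK2.
pose c := s 0 kK ^+ 2.
have hlamE : forall j : 'I_(1 + r),
    lam 0 j = if split j is inr k then s 0 k ^+ 2 else d.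
  by move=> j; rewrite !mxE; case: (split j) => k; rewrite !mxE.
have hKF : \sum_j lam 0 j * w j <= \sum_(j : 'I_(1 + r) | (j < K)%N) lam 0 j.
  apply: (threshold _ _ _ _ c) => //.
  - by move: hK => /andP [].
  - exact: sqr_ge0.
  - move=> j; rewrite hlamE; case: splitP => [j1 Ej|k Ej] /=.
      by move=> _; apply: hsd2.
    move=> Hk; apply: sq_mono; first exact: ltW.
    apply: hsd; rewrite /= ; move: Hk; rewrite Ej; lia.
  - move=> j; rewrite hlamE; case: splitP => [j1 Ej|k Ej] /=.
      move: (ltn_ord j1) hK; rewrite -Ej; lia.
    move=> Hk; apply: sq_mono; first exact: ltW.
    apply: hsd; rewrite /= ; move: Hk; rewrite Ej; lia.
have hsplit : \sum_(j : 'I_(1 + r) | (j < K)%N) lam 0 j =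
    d + \sum_(k : 'I_r | (k < K.-1)%N) s 0 k ^+ 2.
  rewrite big_split_ord /= big_ord1_cond /=.
  have -> : (0 < K)%N by move: hK => /andP [? ?]; lia.
  rewrite /lam row_mxEl mxE; congr (_ + _).
  apply: eq_big => [k|k _]; first by rewrite /=; move: hK => /andP [? ?]; lia.
  by rewrite row_mxEr mxE.
have hKr1 : (K.-1 <= r)%N by move: hK => /andP [? ?]; lia.
have hsk : forall k : 'I_r, (k < K.-1)%N -> s 0 k ^+ 2 = d.
  apply: (sum_le_eq (fun k : 'I_r => (k < K.-1)%N) (fun k => s 0 k ^+ 2) d).
    by move=> k _; apply: hsd2.
  have E1 : \sum_(k : 'I_r | (k < K.-1)%N) d = d * (K.-1)%:R.
    by rewrite -(count_ord _ _ hKr1) mulr_sumr; apply: eq_bigr => k _; rewrite mulr1.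
  have E2 : (K%:R : R) = (K.-1)%:R + 1.
    by rewrite natr1 prednK //; move: hK => /andP [? ?]; lia.
  rewrite E1; have := hKF; rewrite -htrHW hsplit => hKF2; have := le_trans hHW hKF2; rewrite E2; lra.
have hVcc : forall k : 'I_r, (k < K.-1)%N -> cc (V k).
  by move=> k hk; apply: hcc; rewrite hqV rownorm // mulr1 hsk.
have hKr : (K <= 1 + r)%N by move: hK => /andP [].
pose Q := pca_stack K V.
have hQ : forall k j, Q k j = Vt (widen_ord hKr k) j.
  move=> k j; rewrite /Q /pca_stack /Vt !mxE.
  case: splitP => [i1 /= Ei|k' /= Ei].
    by move: Ei; rewrite (ord1 i1) /= => ->; rewrite mxE.
  rewrite Ei add1n /= /row_at.
  case: insubP => [i' _ Ei'|]; last by rewrite ltn_ord.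
  by congr (V _ j); apply: val_inj.
have hQQ : Q *m Q^T = 1%:M.
  apply/matrixP => k l; rewrite mxE.
  transitivity ((Vt *m Vt^T) (widen_ord hKr k) (widen_ord hKr l)).
    by rewrite mxE; apply: eq_bigr => j _; rewrite [Q^T _ _]mxE [Vt^T _ _]mxE !hQ.
  rewrite hVt !mxE; congr (_%:R).
have hQcc : forall k, cc (Q k).
  move=> k i j cij; rewrite !hQ /Vt !mxE.
  case: splitP => [i1 _|k' Ei]; first by rewrite !mxE.
  apply: hVcc => //; move: (ltn_ord k) Ei => /=; lia.
have hcpos : forall k, 0 < (F0 *m F0^T) k k.
  move=> k; have [_ _ Hp _] := inF_facts F0 hF0.
  rewrite mxE; apply: (lt_le_trans (Hp k)); rewrite le_eqVlt; apply/orP; left.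
  by apply/eqP; apply: eq_bigr => j _; rewrite [F0^T j k]mxE.
have hcc_count : forall k, (F0 *m F0^T) k k = \sum_i (idx i == k)%:R.
  move=> k; rewrite mxE; apply: eq_bigr => i _; rewrite !mxE.
  by case: (idx i == k); rewrite ?mulr1 ?mulr0.
have hrec : forall Y : 'M[R]_(K, n), (forall k, cc (Y k)) -> Y *m X0^T *m X0 = Y.
  move=> Y hY; apply/matrixP => a j; rewrite mxE (bigD1 (idx j)) //= big1 ?addr0.
    have hcj := hcc_count (idx j).
    set cj := (F0 *m F0^T) (idx j) (idx j) in hcj *.
    have cj0 : 0 < cj by apply: hcpos.
    rewrite hX0e eqxx mulr1 mxE.
    transitivity (Y a j * (Num.sqrt cj)^-1 * cj * (Num.sqrt cj)^-1).
      congr (_ * _); rewrite {2}hcj mulr_sumr; apply: eq_bigr => i _.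
      rewrite mxE hX0e; case: eqVneq => [Ei|_]; last by rewrite !mulr0.
      by rewrite (hY a i j (hidx1 _ _ Ei)) !mulr1.
    have : Num.sqrt cj ^+ 2 = cj by rewrite sqr_sqrtr // ltW.
    have : Num.sqrt cj != 0 by rewrite sqrtr_eq0 -ltNge.
    move: (Num.sqrt cj) => q q0 qc; rewrite -qc; field; exact: q0.
  by move=> k hk; rewrite hX0e eq_sym (negbTE hk) !mulr0.
pose Mh := H *m X0^T.
pose N := Q *m X0^T.
have hMh : Mh *m X0 = H by apply: hrec.
have hN : N *m X0 = Q by apply: hrec.
have hMM : Mh *m Mh^T = 1%:M by rewrite trmx_mul trmxK mulmxA hMh.
have hNN : N *m N^T = 1%:M by rewrite trmx_mul trmxK mulmxA hN.
exists (N *m Mh^T); split.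
  rewrite trmx_mul trmxK -mulmxA (mulmxA N^T) (mulmx1C hNN) mul1mx //.
by rewrite -mulmxA -{1}hMh (mulmxA Mh^T) (mulmx1C hMM) mul1mx hN.
Qed.
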